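(* Let $E,F,H$ be normed spaces over $\mathbb K$ with $H$ spherically complete. Let $f\colon E\to F$ be an immediate linear isometry and $g\colon E\to H$ a linear isometry. Then there exists a linear isometry $h\colon F\to H$ with $h\circ f=g$.
   Context: $\mathbb K$: nontrivially normed field with ultrametric absolute value; normed space over $\mathbb K$: normed vector space with $\|x+y\|\le\max(\|x\|,\|y\|)$. For $x\in F$ and a subspace $V$, $x\perp_m V$ means $\|x\|=\inf_{v\in V}\|x-v\|$. A linear isometry $f\colon E\to F$ is immediate if the only $v\in F$ with $v\perp_m \operatorname{Im}(f)$ is $v=0$. Spherically complete: every decreasing sequence of closed balls (radii $\ge0$) has nonempty intersection. *)

(* Defs.v *)
From HB Require Import structures.
From mathcomp Require Import all_boot all_order all_algebra.
From mathcomp Require Import classical_sets reals.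
Set Implicit Arguments. Unset Strict Implicit. Unset Printing Implicit Defensive.
Import Order.TTheory GRing.Theory Num.Theory.
Local Open Scope ring_scope.
Local Open Scope classical_set_scope.

Definition ultra_abs (K : fieldType) (R : realType) (a : K -> R) : Prop :=
  [/\ forall x, 0 <= a x,
      forall x, a x = 0 <-> x = 0,
      forall x y, a (x * y) = a x * a y
    & forall x y, a (x + y) <= Num.max (a x) (a y)].

Definition nontrivial_abs (K : fieldType) (R : realType) (a : K -> R) : Prop :=
  exists x : K, a x <> 0 /\ a x <> 1.

Definition ultra_norm (K : fieldType) (R : realType) (a : K -> R)
    (V : lmodType K) (n : V -> R) : Prop :=
  [/\ forall x, 0 <= n x,
      forall x, n x = 0 <-> x = 0,
      forall (c : K) x, n (c *: x) = a c * n x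
    & forall x y, n (x + y) <= Num.max (n x) (n y)].

Definition norm_isometry (K : fieldType) (R : realType) (V W : lmodType K)
    (nV : V -> R) (nW : W -> R) (f : V -> W) : Prop :=
  forall x, nW (f x) = nV x.

Definition perp_m (K : fieldType) (R : realType) (V : lmodType K)
    (n : V -> R) (x : V) (S : set V) : Prop :=
  n x = inf [set n (x - v) | v in S].

Definition immediate (K : fieldType) (R : realType) (V W : lmodType K)
    (nW : W -> R) (f : V -> W) : Prop :=
  forall v : W, perp_m nW v (range f) -> v = 0.

Definition closed_ball (K : fieldType) (R : realType) (V : lmodType K)
    (n : V -> R) (c : V) (r : R) : set V := [set x | n (x - c) <= r].

Definition spherically_complete (K : fieldType) (R : realType) (V : lmodType K)
    (n : V -> R) : Prop :=
  forall (c : nat -> V) (r : nat -> R),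
    (forall k, 0 <= r k) ->
    (forall k, closed_ball n (c k.+1) (r k.+1) `<=` closed_ball n (c k) (r k)) ->
    exists x, forall k, closed_ball n (c k) (r k) x.

(* Main.v *)
Require Import Defs.
From HB Require Import structures.
From mathcomp Require Import all_boot all_order all_algebra.
From mathcomp Require Import boolp classical_sets reals.
From mathcomp Require Import lra.
Import Order.TTheory GRing.Theory Num.Theory.
Local Open Scope ring_scope.
Set Implicit Arguments. Unset Strict Implicit. Unset Printing Implicit Defensive.
Local Open Scope classical_set_scope.

Section Norm.
Variables (R : realType) (K : fieldType) (a : K -> R) (V : lmodType K) (n : V -> R).
Hypotheses (ha : ultra_abs a) (hn : ultra_norm a n).

Lemma a1 : a 1 = 1.
Proof.
case: ha => a0 a0E aM _.
have h := aM 1 1; rewrite mulr1 in h.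
have hne : a 1 <> 0 by move/a0E => /eqP; rewrite oner_eq0.
have : a 1 * (a 1 - 1) = 0 by rewrite mulrBr mulr1 -h subrr.
by move/eqP; rewrite mulf_eq0 subr_eq0 => /orP[/eqP//|/eqP].
Qed.

Lemma aN1 : a (-1) = 1.
Proof.
case: ha => a0 a0E aM _.
have h := aM (-1) (-1); rewrite mulrNN mulr1 a1 in h.
have := a0 (-1); nra.
Qed.

Lemma nZ c x : n (c *: x) = a c * n x.
Proof. by case: hn. Qed.

Lemma n0 : n 0 = 0.
Proof. by case: hn => _ h _ _; apply: (proj2 (h _)). Qed.

Lemma nge0 x : 0 <= n x.
Proof. by case: hn. Qed.

Lemma nN x : n (- x) = n x.
Proof. by rewrite -scaleN1r nZ aN1 mul1r. Qed.

Lemma nsym x y : n (x - y) = n (y - x).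
Proof. by rewrite -nN opprB. Qed.

Lemma nD x y : n (x + y) <= Num.max (n x) (n y).
Proof. by case: hn. Qed.

Lemma ntri x y z : n (x - z) <= Num.max (n (x - y)) (n (y - z)).
Proof. by have := nD (x - y) (y - z); rewrite addrA subrK. Qed.

Lemma nstrict x y : n x < n y -> n (x + y) = n y.
Proof.
move=> lt; apply/eqP; rewrite eq_le; apply/andP; split.
  by have := nD x y; rewrite (max_idPr (ltW lt)).
have := nD (x + y) (- x); rewrite addrC addKr nN.
rewrite le_max => /orP[//|]; by rewrite leNgt lt.
Qed.

Lemma n_eq0 x : n x = 0 -> x = 0.
Proof. by case: hn => _ h _ _; apply: (proj1 (h _)). Qed.
End Norm.

Lemma lmod_aux (K : fieldType) (F : lmodType K) (v v' x : F) c c' :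
  v + c *: x = v' + c' *: x -> c *: x - c' *: x = v' - v.
Proof.
move=> e; apply/eqP; rewrite subr_eq addrAC eq_sym subr_eq (addrC (c *: x)) e //.
Qed.
Section Main.
Variables (R : realType) (K : fieldType) (a : K -> R)
  (ha : ultra_abs a)
  (E F H : lmodType K) (nE : E -> R) (nF : F -> R) (nH : H -> R)
  (hE : ultra_norm a nE) (hF : ultra_norm a nF) (hH : ultra_norm a nH)
  (hsc : spherically_complete nH)
  (f : {linear E -> F}) (g : {linear E -> H})
  (hf : norm_isometry nE nF f) (himm : immediate nF f)
  (hg : norm_isometry nE nH g).

Record ok (p : set F * (F -> H)) : Prop := Ok {
  okD : forall x y, p.1 x -> p.1 y -> p.1 (x + y);
  okZ : forall c x, p.1 x -> p.1 (c *: x);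
  okf : forall e, p.1 (f e);
  okL : forall c x y, p.1 x -> p.1 y -> p.2 (c *: x + y) = c *: p.2 x + p.2 y;
  okN : forall x, p.1 x -> nH (p.2 x) = nF x;
  okg : forall e, p.2 (f e) = g e }.

Lemma exists_y (G : set F) (h : F -> H) (x : F) : ok (G, h) -> ~ G x ->
  exists y, forall u, G u -> nH (y - h u) = nF (x - u).
Proof.
case=> /= GD GZ Gf hL hN hfg Gx.
have G0 : G 0 by rewrite -(linear0 f).
have GB u v : G u -> G v -> G (u - v).
  by move=> Gu Gv; rewrite -scaleN1r; apply: GD => //; apply: GZ.
have hB u v : G u -> G v -> h (u - v) = h u - h v.
  move=> Gu Gv; rewrite addrC -scaleN1r hL // scaleN1r addrC //.
have hNB u v : G u -> G v -> nH (h u - h v) = nF (u - v).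
  by move=> Gu Gv; rewrite -hB // hN //; apply: GB.
have step1 u : G u -> exists u', G u' /\ nF (x - u') < nF (x - u).
  move=> Gu; case: (pselect (exists u', G u' /\ nF (x - u') < nF (x - u))) => // hno.
  exfalso; have xu0 : x - u <> 0.
    by move/eqP; rewrite subr_eq0 => /eqP xu; apply: Gx; rewrite xu.
  apply: xu0; apply: himm; rewrite /perp_m.
  have hle e : nF (x - u) <= nF (x - u - f e).
    rewrite leNgt; apply/negP => lt; apply: hno; exists (u + f e); split.
      by apply: GD.
    by rewrite opprD addrA.
  apply/eqP; rewrite eq_le; apply/andP; split.
    apply: lb_le_inf; first by exists (nF (x - u - 0)), 0 => //; exists 0 => //; rewrite linear0.
    by move=> _ [_ [e _ <-] <-]; apply: hle.
  have : has_lbound [set nF (x - u - v) | v in range f].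
    by exists 0 => _ [v _ <-]; apply: (nge0 hF).
  move/ge_inf; apply; exists 0; last by rewrite subr0.
  by exists 0 => //; rewrite linear0.
pose D := [set nF (x - u) | u in G].
pose d := inf D.
have Dne : D !=set0 by exists (nF (x - 0)), 0.
have Dlb : has_lbound D by exists 0 => _ [v _ <-]; apply: (nge0 hF).
have dlt u : G u -> d < nF (x - u).
  move=> Gu; have [u' [Gu' lt]] := step1 u Gu.
  apply: le_lt_trans lt; apply: (ge_inf Dlb); by exists u'.
have ex_next (k : nat) (u : F) : exists u', G u ->
    [/\ G u', nF (x - u') < nF (x - u) & nF (x - u') < d + k.+1%:R^-1].
  case: (pselect (G u)) => Gu; last by exists 0.
  have : d < Num.min (nF (x - u)) (d + k.+1%:R^-1).
    rewrite lt_min dlt //= ltrDl invr_gt0 ltr0n //.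
  move/(inf_lt Dne) => [_ [u' Gu' <-]]; rewrite lt_min => /andP[l1 l2].
  by exists u'.
pose step k u := projT1 (cid (ex_next k u)).
have stepP k u : G u -> [/\ G (step k u), nF (x - step k u) < nF (x - u)
     & nF (x - step k u) < d + k.+1%:R^-1].
  by move=> Gu; apply: (projT2 (cid (ex_next k u))).
pose s := fix s k := if k is k'.+1 then step k' (s k') else 0.
have Gs k : G (s k) by elim: k => [//|k IH] /=; case: (stepP k _ IH).
have sdec k : nF (x - s k.+1) < nF (x - s k) by case: (stepP k _ (Gs k)).
have sapp k : nF (x - s k.+1) < d + k.+1%:R^-1 by case: (stepP k _ (Gs k)).
have [y hy] : exists y, forall k, closed_ball nH (h (s k)) (nF (x - s k)) y.
  apply: hsc => [k|k z]; first exact: (nge0 hF).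
  rewrite /closed_ball /= => hz.
  apply: le_trans (ntri hH _ (h (s k.+1)) _) _.
  rewrite ge_max; apply/andP; split; first exact: (le_trans hz (ltW (sdec k))).
  rewrite hNB //; apply: le_trans (ntri hF _ x _) _.
  by rewrite ge_max (nsym ha hF (s k.+1)) (ltW (sdec k)) lexx.
have hyle u : G u -> nH (y - h u) <= nF (x - u).
  move=> Gu; have eps0 : 0 < nF (x - u) - d by rewrite subr_gt0 dlt.
  pose k := Num.bound (nF (x - u) - d)^-1.
  have hk : (nF (x - u) - d)^-1 < k%:R by apply: archi_boundP; rewrite ltW // invr_gt0.
  have hk' : k.+1%:R^-1 < nF (x - u) - d.
    by rewrite invf_plt ?posrE ?ltr0n // (lt_trans hk) // ltr_nat.
  have rlt : nF (x - s k.+1) < nF (x - u).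
    apply: lt_trans (sapp k) _; by rewrite -ltrBrDl.
  apply: le_trans (ntri hH _ (h (s k.+1)) _) _.
  rewrite ge_max; apply/andP; split; first exact: (le_trans (hy _) (ltW rlt)).
  rewrite hNB //; apply: le_trans (ntri hF _ x _) _.
  by rewrite ge_max (nsym ha hF (s k.+1)) (ltW rlt) lexx.
exists y => u Gu.
have [u' [Gu' lt]] := step1 u Gu.
have e1 : nF (u' - u) = nF (x - u).
  by rewrite -(subrK x u') -addrA (nstrict ha hF (x:=u' - x) (y:=x - u)) // (nsym ha hF u').
rewrite -(subrK (h u') y) -addrA (nstrict ha hH) ?hNB //.
by rewrite e1; apply: le_lt_trans (hyle _ Gu') lt.
Qed.

Lemma ok_lin (G : set F) (h : F -> H) : ok (G, h) ->
  [/\ G 0, h 0 = 0, (forall c v, G v -> h (c *: v) = c *: h v)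
    & (forall u v, G u -> G v -> h (u + v) = h u + h v)].
Proof.
case=> /= GD GZ Gf hL hN hfg.
have G0 : G 0 by rewrite -(linear0 f).
have h0 : h 0 = 0 by apply: (n_eq0 hH); rewrite hN // (n0 hF).
split=> // [c v Gv|u v Gu Gv]; first by rewrite -[c *: v]addr0 hL // h0 addr0.
by have := hL 1 u v Gu Gv; rewrite !scale1r.
Qed.

Lemma extend (G : set F) (h : F -> H) (x : F) : ok (G, h) -> ~ G x ->
  exists h', ok ([set z | exists v c, G v /\ z = v + c *: x], h') /\
     (forall z, G z -> h' z = h z).
Proof.
move=> okh Gx; have [y hy] := exists_y okh Gx.
have [G0 h0 hZ hD] := ok_lin okh.
case: okh => /= GD GZ Gf hL hN hfg.
have uniq v v' c c' : G v -> G v' -> v + c *: x = v' + c' *: x -> v = v' /\ c = c'.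
  move=> Gv Gv' e.
  have cc : c = c'.
    apply/eqP; apply/negP => /negP ne; apply: Gx.
    have -> : x = (c - c')^-1 *: (v' - v).
      apply: (@scalerI _ _ (c - c')); first by rewrite subr_eq0.
      rewrite scalerA mulfV ?subr_eq0 // scale1r scalerBl.
      exact: lmod_aux.
    apply: (GZ); rewrite -scaleN1r; apply: (GD) => //; exact: (GZ).
  by split=> //; move: e; rewrite cc => /addIr.
pose h' z := match pselect (exists p : F * K, G p.1 /\ z = p.1 + p.2 *: x) with
  | left pf => h (projT1 (cid pf)).1 + (projT1 (cid pf)).2 *: y
  | right _ => 0 end.
have h'E v c : G v -> h' (v + c *: x) = h v + c *: y.
  move=> Gv; rewrite /h'; case: pselect => [pf|no]; last first.
    by exfalso; apply: no; exists (v, c).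
  case: (cid pf) => [[v' c'] /= [G1 e]].
  by have [-> ->] := uniq _ _ _ _ Gv G1 e.
exists h'; split; last first.
  by move=> z Gz; have := h'E z 0 Gz; rewrite !scale0r !addr0.
have GG' v c : G v -> [set z | exists v c, G v /\ z = v + c *: x] (v + c *: x).
  by move=> Gv; exists v, c.
split=> /=.
- move=> _ _ [v1 [c1 [G1 ->]]] [v2 [c2 [G2 ->]]]; exists (v1 + v2), (c1 + c2); split.
    exact: GD.
  by rewrite scalerDl addrACA.
- move=> d _ [v [c [Gv ->]]]; exists (d *: v), (d * c); split; first exact: GZ.
  by rewrite scalerDr scalerA.
- by move=> e; exists (f e), 0; rewrite scale0r addr0.
- move=> d _ _ [v1 [c1 [G1 ->]]] [v2 [c2 [G2 ->]]].
  have -> : d *: (v1 + c1 *: x) + (v2 + c2 *: x) = (d *: v1 + v2) + (d * c1 + c2) *: x.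
    by rewrite scalerDr scalerA scalerDl addrACA.
  rewrite !h'E //; last by apply: GD => //; apply: GZ.
  by rewrite hD ?hZ //; [rewrite scalerDr scalerA scalerDl addrACA | apply: GZ].
- move=> _ [v [c [Gv ->]]]; rewrite h'E //.
  have [->|c0] := eqVneq c 0; first by rewrite !scale0r !addr0 hN.
  pose u := - (c^-1 *: v).
  have Gu : G u by rewrite /u -scaleN1r; apply: (GZ); apply: (GZ).
  have e1 : h v + c *: y = c *: (y - h u).
    rewrite /u -(scaleN1r (c^-1 *: v)) hZ; last exact: (GZ).
    by rewrite hZ // scaleN1r opprK scalerDr scalerA mulfV // scale1r addrC.
  have e2 : v + c *: x = c *: (x - u).
    by rewrite /u opprK scalerDr scalerA mulfV // scale1r addrC.
  by rewrite e1 e2 !(nZ hH) (nZ hF) hy.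
- by move=> e; have := h'E (f e) 0 (Gf e); rewrite !scale0r !addr0 hfg.
Qed.

Definition ple (p q : set F * (F -> H)) : Prop :=
  p.1 `<=` q.1 /\ forall z, p.1 z -> q.2 z = p.2 z.

Lemma f_inj : injective f.
Proof.
move=> e1 e2 e; apply/eqP; rewrite -subr_eq0; apply/eqP; apply: (n_eq0 hE).
by rewrite -hf linearB e subrr (n0 hF).
Qed.

Lemma ok0 : exists h0, ok (range f, h0).
Proof.
pose h0 y := g (xget 0 [set e | f e = y]).
have h0f e : h0 (f e) = g e.
  rewrite /h0; congr (g _); apply: f_inj.
  by have := @xgetPex _ 0 [set e' | f e' = f e]; apply; exists e.
exists h0; split=> /=.
- by move=> _ _ [e1 _ <-] [e2 _ <-]; exists (e1 + e2) => //; rewrite linearD.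
- by move=> c _ [e _ <-]; exists (c *: e) => //; rewrite linearZ.
- by move=> e; exists e.
- move=> c _ _ [e1 _ <-] [e2 _ <-].
  by rewrite -linearZ -linearD h0f !h0f linearD linearZ.
- by move=> _ [e _ <-]; rewrite h0f hg hf.
- exact: h0f.
Qed.

Lemma main : exists h : F -> H,
  [/\ forall c x y, h (c *: x + y) = c *: h x + h y,
      forall x, nH (h x) = nF x & forall e, h (f e) = g e].
Proof.
pose T := {p : set F * (F -> H) | ok p}.
pose Rb (s t : T) := `[< ple (sval s) (sval t) >].
have [h0 ok0'] := ok0.
pose t0 : T := exist _ (range f, h0) ok0'.
have [| | |t tmax] := @ZL_preorder T t0 Rb.
- by move=> s; apply/asboolP; split.
- move=> r s t /asboolP [rs1 rs2] /asboolP [st1 st2]; apply/asboolP; split.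
    by move=> z /rs1 /st1.
  by move=> z rz; rewrite st2 ?rs2 //; apply: rs1.
- move=> A Atot.
  case: (pselect (exists s, A s)) => [[s0 As0]|noA]; last first.
    by exists t0 => s As; exfalso; apply: noA; exists s.
  pose Gs := fun z => exists s, A s /\ (sval s).1 z.
  pose hs := fun z => match pselect (exists s, A s /\ (sval s).1 z) with
    | left pf => (sval (projT1 (cid pf))).2 z | right _ => 0 end.
  have hsE s z : A s -> (sval s).1 z -> hs z = (sval s).2 z.
    move=> As Gz; rewrite /hs; case: pselect => [pf|no]; last first.
      by exfalso; apply: no; exists s.
    case: (cid pf) => s' [As' Gz'] /=.
    case: (Atot _ _ As As') => /asboolP [i1 i2]; first by rewrite i2.
    by rewrite i2.
  have big s1 s2 : A s1 -> A s2 -> exists s, [/\ A s, (sval s1).1 `<=` (sval s).1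
      & (sval s2).1 `<=` (sval s).1].
    move=> A1 A2; case: (Atot _ _ A1 A2) => /asboolP [i1 _].
      by exists s2; split => // z.
    by exists s1; split => // z.
  have okS : ok (Gs, hs).
    split=> /=.
    - move=> z1 z2 [s1 [A1 G1]] [s2 [A2 G2]]; have [s [As i1 i2]] := big _ _ A1 A2.
      by exists s; split => //; apply: (okD (svalP s)); [apply: i1 | apply: i2].
    - move=> c z1 [s [As G1]]; exists s; split => //; exact: (okZ (svalP s)).
    - by move=> e; exists s0; split => //; exact: (okf (svalP s0)).
    - move=> c z1 z2 [s1 [A1 G1]] [s2 [A2 G2]]; have [s [As i1 i2]] := big _ _ A1 A2.
      have Gx := i1 _ G1; have Gy := i2 _ G2.
      rewrite (hsE s) //; last by apply: (okD (svalP s)) => //; exact: (okZ (svalP s)).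
      by rewrite (hsE s z1) // (hsE s z2) // (okL (svalP s)).
    - by move=> z [s [As Gz]]; rewrite (hsE s) // (okN (svalP s)).
    - by move=> e; rewrite (hsE s0) // ?(okg (svalP s0)) //; exact: (okf (svalP s0)).
  exists (exist _ (Gs, hs) okS) => s As; apply/asboolP; split => /=.
    by move=> z Gz; exists s.
  by move=> z Gz; rewrite (hsE s).
case: t tmax => [[G h] okt] /= tmax.
have GT x : G x.
  case: (pselect (G x)) => // Gx; exfalso.
  have [h' [ok' agree]] := extend okt Gx.
  have hR : Rb (exist _ (G, h) okt) (exist _ _ ok').
    apply/asboolP; split => /= [z Gz|z Gz]; last by apply: agree.
    by exists z, 0; rewrite scale0r addr0.
  have /asboolP [sub _] := tmax _ hR.
  apply: Gx; apply: sub; exists 0, 1; split; first by rewrite -(linear0 f); exact: (okf okt).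
  by rewrite scale1r add0r.
exists h; split.
- by move=> c x y; apply: (okL okt).
- by move=> x; apply: (okN okt).
- exact: (okg okt).
Qed.
End Main.

Definition lin_of (K : fieldType) (F H : lmodType K) (h : F -> H) (hl : linear h) := h.
Arguments lin_of {K F H} h hl.
HB.instance Definition _ (K : fieldType) (F H : lmodType K) (h : F -> H) (hl : linear h) :=
  GRing.isLinear.Build K F H *:%R (lin_of h hl) hl.

Theorem lemma6p2 (R : realType) (K : fieldType) (a : K -> R)
  (ha : ultra_abs a) (hnt : nontrivial_abs a)
  (E F H : lmodType K) (nE : E -> R) (nF : F -> R) (nH : H -> R)
  (hE : ultra_norm a nE) (hF : ultra_norm a nF) (hH : ultra_norm a nH)
  (hsc : spherically_complete nH)
  (f : {linear E -> F}) (g : {linear E -> H})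
  (hf : norm_isometry nE nF f) (himm : immediate nF f)
  (hg : norm_isometry nE nH g) :
  exists h : {linear F -> H}, norm_isometry nF nH h /\ (forall x, h (f x) = g x).
Proof.
have [h [hL hN hfg]] := main ha hE hF hH hsc hf himm hg.
have hl : linear h by move=> c x y; apply: hL.
by exists (lin_of h hl); split.
Qed.
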